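(* Let $R$ be a dp-minimal Noetherian integral domain with fraction field $K$, and suppose $R\neq K$. Let $\tilde{R}$ be the integral closure of $R$ in $K$. Then the $R$-adic topology on $K$ agrees with the $\tilde{R}$-adic topology on $K$. Moreover, there is $a\in K^\times$ such that $a\tilde{R}\subseteq R$.
   Context: Rings are commutative and unital; a ring is dp-minimal if $(R,+,\cdot)$ has dp-rank $1$. For a domain $A$ with fraction field $K\neq A$, the $A$-adic topology on $K$ is the ring topology on $K$ in which $\{aA : a\in K^\times\}$ is a neighborhood basis of $0$. *)

(* Defs.v *)
From mathcomp Require Import all_boot all_order all_algebra.
Set Implicit Arguments. Unset Strict Implicit. Unset Printing Implicit Defensive.
Import GRing.Theory.
Local Open Scope ring_scope.

Definition is_ideal (R : comRingType) (I : R -> Prop) : Prop :=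
  [/\ I 0, (forall x y, I x -> I y -> I (x + y)) & (forall r x, I x -> I (r * x))].

Definition fin_gen (R : comRingType) (I : R -> Prop) : Prop :=
  exists s : seq R, forall x, I x <->
    exists c : nat -> R, x = \sum_(i < size s) c i * s`_i.

Definition noetherian (R : comRingType) : Prop :=
  forall I : R -> Prop, is_ideal I -> fin_gen I.

(* First-order formulas in the ring language over R are GRing.formula R
   (constants from R allowed as parameters; Inv/Unit are definable in the
   ring language, so they add no expressive power).  Variable 'X_0 is the
   object variable x, the remaining variables are parameters, supplied by
   the environment a :: b.
   An ict-pattern of depth 2 (in the single variable x) consists of formulas
   phi(x;y), psi(x;z) and arrays (b_k), (c_l) such that for all i, j the type
   {phi(x,b_k)^(k=i), psi(x,c_l)^(l=j)} is consistent.  By compactness this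
   exists in the monster model iff for every n a finite n x n pattern exists,
   and (being existential) iff it exists in R itself.
   dp-minimal := dp-rank <= 1 := no ict-pattern of depth 2. *)
Definition ict2_pattern (R : unitRingType) (phi psi : GRing.formula R) (n : nat)
    (b c : nat -> seq R) : Prop :=
  forall i j, (i < n)%N -> (j < n)%N ->
    exists a : R,
      (forall k, (k < n)%N -> (GRing.holds (a :: b k) phi <-> k = i)) /\
      (forall l, (l < n)%N -> (GRing.holds (a :: c l) psi <-> l = j)).

Definition dp_minimal (R : unitRingType) : Prop :=
  ~ exists phi psi : GRing.formula R,
      forall n : nat, exists b c : nat -> seq R, ict2_pattern phi psi n b c.

Definition integral_over (R : idomainType) (K : fieldType) (f : {rmorphism R -> K})
    (x : K) : Prop :=
  exists p : {poly R}, p \is monic /\ root (map_poly f p) x.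

Definition image_ring (R : idomainType) (K : fieldType) (f : {rmorphism R -> K})
    (x : K) : Prop := exists r : R, x = f r.

(* Open sets of the A-adic topology on K: the group topology in which
   {a A : a in K^x} is a neighbourhood basis of 0. *)
Definition adic_open (K : fieldType) (A : K -> Prop) (U : K -> Prop) : Prop :=
  forall x, U x -> exists a : K, a != 0 /\ forall y, A y -> U (x + a * y).

(* Main.v *)
Require Import Defs.
From mathcomp Require Import all_boot all_order all_algebra.
From mathcomp Require Import ring.
From Stdlib Require Import Classical.
Set Implicit Arguments. Unset Strict Implicit.
Import GRing.Theory.
Local Open Scope ring_scope.

Definition phiF (R : unitRingType) : GRing.formula R :=
  GRing.Exists 3 (GRing.Equal (GRing.Add (@GRing.Var R 0) (GRing.Opp (@GRing.Var R 1)))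
                              (GRing.Mul (@GRing.Var R 2) (@GRing.Var R 3))).

Lemma holds_phiF (R : unitRingType) (a y0 y1 : R) :
  GRing.holds [:: a; y0; y1] (phiF R) <-> exists s, a - y0 = y1 * s.
Proof. by []. Qed.

Definition cz (R : comPzRingType) (n : nat) (b : R) : R :=
  b ^+ n * \prod_(d < n) (1 - b ^+ d.+1).

Lemma cz_dvd_lt (R : comPzRingType) (n : nat) (b : R) i k :
  (i < k)%N -> (k < n)%N -> exists m, cz n b = (b ^+ i - b ^+ k) * m.
Proof.
move=> ik kn.
have dn : (k - i.+1 < n)%N by apply: leq_ltn_trans kn; apply: leq_subr.
rewrite /cz (bigD1 (Ordinal dn)) //=.
have ek : b ^+ k = b ^+ i * b ^+ (k - i.+1).+1.
  by rewrite -exprD subnSK // subnKC // ltnW.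
have en : b ^+ n = b ^+ i * b ^+ (n - i).
  by rewrite -exprD subnKC // ltnW // (ltn_trans ik kn).
exists (b ^+ (n - i) * \prod_(j < n | j != Ordinal dn) (1 - b ^+ j.+1)).
rewrite en ek; ring.
Qed.

Lemma cz_dvd (R : comPzRingType) (n : nat) (b : R) i k :
  (i < n)%N -> (k < n)%N -> i != k -> exists m, cz n b = (b ^+ i - b ^+ k) * m.
Proof.
move=> hi hk; rewrite neq_ltn => /orP [ik|ki].
  exact: cz_dvd_lt.
have [m hm] := cz_dvd_lt b ki hi; exists (- m); rewrite hm; ring.
Qed.

Lemma cz_neq0 (R : idomainType) (n : nat) (b : R) :
  b != 0 -> b \notin GRing.unit -> cz n b != 0.
Proof.
move=> b0 bu; rewrite /cz mulf_neq0 ?expf_neq0 //.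
apply/prodf_neq0 => d _; rewrite subr_eq0; apply: contra bu => /eqP h.
by apply/unitrPr; exists (b ^+ d); rewrite h exprS.
Qed.

Lemma eq_sym_neq (T : eqType) (x y : T) : x != y -> y != x.
Proof. by rewrite eq_sym. Qed.

Lemma dich (R : idomainType) (b : R) : b != 0 -> b \notin GRing.unit ->
  dp_minimal R -> exists c0 : R, c0 != 0 /\ forall p q : R,
    (exists s, c0 * p = q * s) \/ (exists s, c0 * q = p * s).
Proof.
move=> b0 bu hdp.
have [n Hn] : exists n, forall bb cc, ~ ict2_pattern (phiF R) (phiF R) n bb cc.
  apply: NNPP => H; apply: hdp; exists (phiF R), (phiF R) => n.
  apply: NNPP => H2; apply: H; exists n => bb cc hp; apply: H2; by exists bb, cc.
exists (cz n b); split; first exact: cz_neq0.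
move=> p q; apply: NNPP => H.
apply: (Hn (fun k => [:: p * b ^+ k; q]) (fun l => [:: q * b ^+ l; p])).
move=> i j hi hj; exists (p * b ^+ i + q * b ^+ j); split => k hk.
- rewrite holds_phiF; split.
    move=> [s hs]; apply/eqP; apply: contraT => hik; exfalso.
    have [m hm] := cz_dvd b hi hk (eq_sym_neq hik).
    apply: H; left; exists ((s - b ^+ j) * m).
    have e : p * (b ^+ i - b ^+ k) = q * (s - b ^+ j).
      have -> : q * (s - b ^+ j) = q * s - q * b ^+ j by ring.
      rewrite -hs; ring.
    rewrite hm mulrA -e; ring.
  by move=> ->; exists (b ^+ j); ring.
- rewrite holds_phiF; split.
    move=> [s hs]; apply/eqP; apply: contraT => hjk; exfalso.
    have [m hm] := cz_dvd b hj hk (eq_sym_neq hjk).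
    apply: H; right; exists ((s - b ^+ i) * m).
    have e : q * (b ^+ j - b ^+ k) = p * (s - b ^+ i).
      have -> : p * (s - b ^+ i) = p * s - p * b ^+ i by ring.
      rewrite -hs; ring.
    rewrite hm mulrA -e; ring.
  by move=> ->; exists (b ^+ i); ring.
Qed.

Lemma inv_integral (R : idomainType) (K : fieldType) (f : {rmorphism R -> K})
  (s : R) (x : K) : x * f s = 1 -> integral_over f x -> image_ring f x.
Proof.
move=> xs [P [mP rP]].
have lc : lead_coef P = 1 by apply/eqP.
have sz : size (map_poly f P) = size P by rewrite size_map_poly_id0 // lc rmorph1 oner_neq0.
have sP : (0 < size P)%N by rewrite size_poly_gt0 monic_neq0.
move: rP; rewrite /root horner_coef sz.
case eS: (size P) sP => [|n] // _.
rewrite big_ord_recr /= coef_map /=.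
have -> : P`_n = 1 by rewrite -lc lead_coefE eS.
rewrite rmorph1 mul1r => /eqP h.
set w := \sum_(i < n) P`_i * s ^+ (n - i.+1).
have hw : f s * f w + 1 = 0.
  have := congr1 (fun z => z * f s ^+ n) h.
  rewrite mul0r mulrDl -exprMn xs expr1n mulr_suml => <-.
  congr (_ + _).
  rewrite rmorph_sum mulr_sumr; apply: eq_bigr => i _ /=.
  rewrite coef_map /= rmorphM rmorphXn /=.
  have hi : (n - i.+1).+1 = (n - i)%N by rewrite subnSK.
  have en : f s ^+ n = f s ^+ i * f s ^+ (n - i).
    by rewrite -exprD subnKC // ltnW.
  rewrite en -hi exprS.
  have -> : f P`_i * x ^+ i * (f s ^+ i * (f s * f s ^+ (n - i.+1)))
    = f P`_i * (x * f s) ^+ i * (f s * f s ^+ (n - i.+1)) by rewrite exprMn; ring.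
  rewrite xs expr1n; ring.
exists (- w); rewrite rmorphN.
have : x * (f s * f w + 1) = 0 by rewrite hw mulr0.
rewrite mulrDr mulr1 mulrA xs mul1r => /eqP; rewrite addrC addr_eq0 => /eqP ->.
done.
Qed.

Theorem lemma8p5 (R : idomainType) (K : fieldType) (f : {rmorphism R -> K})
  (f_inj : injective f)
  (f_frac : forall x : K, exists a b : R, b != 0 /\ x = f a / f b)
  (hR_noeth : noetherian R)
  (hR_dp : dp_minimal R)
  (hRK : exists x : K, forall r : R, f r != x) :
  (forall U : K -> Prop,
      adic_open (image_ring f) U <-> adic_open (integral_over f) U) /\
  (exists a : K, a != 0 /\
      forall x : K, integral_over f x -> image_ring f (a * x)).
Proof.
have fn0 : forall r : R, r != 0 -> f r != 0.
  by move=> r; apply: contra => /eqP h; apply/eqP; apply: f_inj; rewrite h rmorph0.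
have [c [cn0 hc]] : exists c : R, c != 0 /\
    forall x : K, integral_over f x -> image_ring f (f c * x).
  have [x0 hx0] := hRK.
  have [a0 [b0 [b00 ex0]]] := f_frac x0.
  have bu : b0 \notin GRing.unit.
    apply/negP => bu; have := hx0 (a0 * b0^-1).
    by rewrite rmorphM rmorphV // ex0 eqxx.
  have [c0 [c00 hd]] := dich b00 bu hR_dp.
  exists (c0 * c0); split; first by rewrite mulf_neq0.
  move=> x hx.
  have [p [q [q0 ex]]] := f_frac x.
  case: (eqVneq p 0) => [pz | p0].
    by exists 0; rewrite ex pz rmorph0 mul0r mulr0.
  case: (hd (c0 * p) q) => [[s hs] | [s hs]].
    exists s; rewrite ex mulrA -rmorphM -mulrA hs rmorphM.
    by rewrite mulrAC divff ?mul1r // fn0.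
  have hq : q = p * s by apply: (mulfI c00); rewrite hs mulrA.
  have [w hw] : image_ring f x.
    apply: (inv_integral (s := s)) => //.
    have s0 : s != 0 by apply: contraNneq q0 => sz; rewrite hq sz mulr0.
    rewrite ex hq rmorphM invfM mulrA mulrAC divff ?mul1r ?divff ?fn0 //.
  by exists (c0 * c0 * w); rewrite hw [RHS]rmorphM.
split; last by exists (f c); split; [exact: fn0 | exact: hc].
move=> U; split => hU x /hU [a [a0 ha]].
  exists (a * f c); split; first by rewrite mulf_neq0 ?fn0.
  move=> y /hc [r hr]; rewrite -mulrA hr; apply: ha; by exists r.
exists a; split => // y [r ->]; apply: ha.
exists ('X - r%:P); split; first exact: monicXsubC.
by rewrite map_polyXsubC root_XsubC.
Qed.
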